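(* Let $\boldsymbol{m}=(m_1,m_2)\in\mathbb{N}^2$ and $g=\gcd(m_1,m_2)$. Then \[\mathrm{LS}^{(\boldsymbol{m})}=\bigcup_{\rho=0}^{2g-1}\Big\{\boldsymbol{\varrho}^{(\boldsymbol{m})}_{\rho/m_2}\big(t_l\big)\ :\ l\in\{0,\dots,4m_1m_2/g-1\}\Big\},\qquad t_l=\frac{l\pi}{2m_1m_2}.\]
   Context: Rhodonea curve: $\boldsymbol{\varrho}^{(\boldsymbol{m})}_\alpha(t)=\big(\cos(m_2t)\cos(m_1t-\alpha\pi),\ \cos(m_2t)\sin(m_1t-\alpha\pi)\big)$, $t\in\mathbb{R}$, $\alpha\in\mathbb{R}$. Nodal index set: $\mathrm{I}^{(\boldsymbol{m})}=\{(i_1,i_2)\in\mathbb{Z}^2:\ 0\le i_1\le m_1,\ -2m_2<i_2\le 2m_2,\ i_2\le0\text{ if }i_1=m_1,\ i_1+i_2\text{ even}\}$. For $\boldsymbol{i}\in\mathrm{I}^{(\boldsymbol{m})}$ put $r_{i_1}=\cos\!\big(\frac{i_1\pi}{2m_1}\big)$, $\theta_{i_2}=\frac{i_2\pi}{2m_2}$ and $\boldsymbol{x}_{\boldsymbol{i}}=(r_{i_1}\cos\theta_{i_2},\ r_{i_1}\sin\theta_{i_2})$. The rhodonea nodes are $\mathrm{LS}^{(\boldsymbol{m})}=\{\boldsymbol{x}_{\boldsymbol{i}}:\boldsymbol{i}\in\mathrm{I}^{(\boldsymbol{m})}\}$. *)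

(* Defs.v *)
From Stdlib Require Import Reals ZArith Arith.
Open Scope R_scope.

Definition rhodonea (m1 m2 : nat) (alpha t : R) : R * R :=
  (cos (INR m2 * t) * cos (INR m1 * t - alpha * PI),
   cos (INR m2 * t) * sin (INR m1 * t - alpha * PI)).

Definition in_index_set (m1 m2 : nat) (i1 i2 : Z) : Prop :=
  (0 <= i1 <= Z.of_nat m1)%Z /\
  (- 2 * Z.of_nat m2 < i2 <= 2 * Z.of_nat m2)%Z /\
  (i1 = Z.of_nat m1 -> (i2 <= 0)%Z) /\
  Z.Even (i1 + i2).

Definition node (m1 m2 : nat) (i1 i2 : Z) : R * R :=
  let r := cos (IZR i1 * PI / (2 * INR m1)) in
  let th := IZR i2 * PI / (2 * INR m2) in
  (r * cos th, r * sin th).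

Definition in_LS (m1 m2 : nat) (p : R * R) : Prop :=
  exists i1 i2 : Z, in_index_set m1 m2 i1 i2 /\ p = node m1 m2 i1 i2.

Definition t_l (m1 m2 l : nat) : R := INR l * PI / (2 * INR m1 * INR m2).

(* Main.v *)
Require Import Defs.
From Stdlib Require Import Reals ZArith Arith Lia Lra.
Open Scope R_scope.

Lemma cosZ (x : R) (k : Z) : cos (x + IZR k * (2*PI)) = cos x.
Proof.
  destruct (Z_le_gt_dec 0 k) as [h|h].
  - rewrite <- (Z2Nat.id k h), <- INR_IZR_INZ.
    rewrite <- (cos_period x (Z.to_nat k)). f_equal; ring.
  - replace k with (- Z.of_nat (Z.to_nat (-k)))%Z by lia.
    rewrite opp_IZR, <- INR_IZR_INZ.
    rewrite <- (cos_period (x + - INR (Z.to_nat (- k)) * (2 * PI)) (Z.to_nat (-k))).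
    f_equal; ring.
Qed.

Lemma sinZ (x : R) (k : Z) : sin (x + IZR k * (2*PI)) = sin x.
Proof.
  destruct (Z_le_gt_dec 0 k) as [h|h].
  - rewrite <- (Z2Nat.id k h), <- INR_IZR_INZ.
    rewrite <- (sin_period x (Z.to_nat k)). f_equal; ring.
  - replace k with (- Z.of_nat (Z.to_nat (-k)))%Z by lia.
    rewrite opp_IZR, <- INR_IZR_INZ.
    rewrite <- (sin_period (x + - INR (Z.to_nat (- k)) * (2 * PI)) (Z.to_nat (-k))).
    f_equal; ring.
Qed.

Section S.
Variables m1 m2 : nat.
Hypothesis hm1 : (0 < m1)%nat.
Hypothesis hm2 : (0 < m2)%nat.

Lemma M1nz : INR m1 <> 0.
Proof. apply not_0_INR; lia. Qed.
Lemma M2nz : INR m2 <> 0.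
Proof. apply not_0_INR; lia. Qed.

Lemma node_shift a b a' b' k1 k2 :
  a' = (a + 4 * Z.of_nat m1 * k1)%Z -> b' = (b + 4 * Z.of_nat m2 * k2)%Z ->
  node m1 m2 a' b' = node m1 m2 a b.
Proof.
  intros -> ->. unfold node.
  pose proof M1nz; pose proof M2nz.
  assert (E1 : IZR (a + 4 * Z.of_nat m1 * k1) * PI / (2 * INR m1)
     = IZR a * PI / (2 * INR m1) + IZR k1 * (2*PI)).
  { rewrite plus_IZR, !mult_IZR, <- INR_IZR_INZ. field; auto. }
  assert (E2 : IZR (b + 4 * Z.of_nat m2 * k2) * PI / (2 * INR m2)
     = IZR b * PI / (2 * INR m2) + IZR k2 * (2*PI)).
  { rewrite plus_IZR, !mult_IZR, <- INR_IZR_INZ. field; auto. }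
  rewrite E1, E2, cosZ, cosZ, sinZ. reflexivity.
Qed.

Lemma node_neg a b : node m1 m2 (-a) b = node m1 m2 a b.
Proof.
  unfold node. rewrite opp_IZR.
  replace (- IZR a * PI / (2 * INR m1)) with (- (IZR a * PI / (2 * INR m1))) by (field; apply M1nz).
  rewrite cos_neg. reflexivity.
Qed.

Lemma node_flip a b a' b' :
  a' = (2 * Z.of_nat m1 - a)%Z -> b' = (b + 2 * Z.of_nat m2)%Z ->
  node m1 m2 a' b' = node m1 m2 a b.
Proof.
  intros -> ->. unfold node.
  pose proof M1nz; pose proof M2nz.
  assert (E1 : IZR (2 * Z.of_nat m1 - a) * PI / (2 * INR m1)
     = PI - IZR a * PI / (2 * INR m1)).
  { rewrite minus_IZR, !mult_IZR, <- INR_IZR_INZ. field; auto. }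
  assert (E2 : IZR (b + 2 * Z.of_nat m2) * PI / (2 * INR m2)
     = IZR b * PI / (2 * INR m2) + PI).
  { rewrite plus_IZR, !mult_IZR, <- INR_IZR_INZ. field; auto. }
  rewrite E1, E2, Rtrigo_facts.cos_pi_minus, neg_cos, neg_sin.
  f_equal; ring.
Qed.

Lemma node_zero b b' : node m1 m2 (Z.of_nat m1) b = node m1 m2 (Z.of_nat m1) b'.
Proof.
  unfold node.
  replace (IZR (Z.of_nat m1) * PI / (2 * INR m1)) with (PI/2)
    by (rewrite <- INR_IZR_INZ; field; apply M1nz).
  rewrite cos_PI2. f_equal; ring.
Qed.

Lemma even_of a b e : (a + b = 2 * e)%Z -> Z.Even (a + b).
Proof. intros h. exists e. lia. Qed.

Lemma normalize a b e : (a + b = 2 * e)%Z ->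
  exists i1 i2, in_index_set m1 m2 i1 i2 /\ node m1 m2 a b = node m1 m2 i1 i2.
Proof.
  intros he.
  set (M1 := Z.of_nat m1) in *. set (M2 := Z.of_nat m2) in *.
  assert (p1 : (0 < M1)%Z) by (unfold M1; lia).
  assert (p2 : (0 < M2)%Z) by (unfold M2; lia).
  assert (S1 : exists a1 b1 e1, (0 <= a1 <= 2*M1)%Z /\ (a1 + b1 = 2*e1)%Z /\
     node m1 m2 a b = node m1 m2 a1 b1).
  { pose proof (Z.div_mod a (4*M1) ltac:(lia)) as hd.
    pose proof (Z.mod_pos_bound a (4*M1) ltac:(lia)) as hb.
    set (q := (a / (4*M1))%Z) in *. set (r := (a mod (4*M1))%Z) in *.
    assert (Ea : node m1 m2 a b = node m1 m2 r b).
    { apply (node_shift r b a b q 0); lia. }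
    destruct (Z_le_gt_dec r (2*M1)).
    - exists r, b, (e - 2*M1*q)%Z. split; [lia|split; [lia|exact Ea]].
    - exists (4*M1 - r)%Z, b, (e - 2*M1*q - r + 2*M1)%Z.
      split; [lia|split; [lia|]].
      rewrite Ea, <- (node_neg r b). apply eq_sym, (node_shift (-r) b _ b 1 0); lia. }
  destruct S1 as (a1 & b1 & e1 & ha1 & he1 & E1).
  assert (S2 : exists a2 b2 e2, (0 <= a2 <= M1)%Z /\ (a2 + b2 = 2*e2)%Z /\
     node m1 m2 a1 b1 = node m1 m2 a2 b2).
  { destruct (Z_le_gt_dec a1 M1).
    - exists a1, b1, e1. repeat split; auto; lia.
    - exists (2*M1 - a1)%Z, (b1 + 2*M2)%Z, (e1 - a1 + M1 + M2)%Z.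
      split; [lia|split; [lia|]]. symmetry; apply node_flip; lia. }
  destruct S2 as (a2 & b2 & e2 & ha2 & he2 & E2).
  assert (S3 : exists b3 e3, (- 2*M2 < b3 <= 2*M2)%Z /\ (a2 + b3 = 2*e3)%Z /\
     node m1 m2 a2 b2 = node m1 m2 a2 b3).
  { pose proof (Z.div_mod b2 (4*M2) ltac:(lia)) as hd.
    pose proof (Z.mod_pos_bound b2 (4*M2) ltac:(lia)) as hb.
    set (q := (b2 / (4*M2))%Z) in *. set (r := (b2 mod (4*M2))%Z) in *.
    assert (Eb : node m1 m2 a2 b2 = node m1 m2 a2 r).
    { apply (node_shift a2 r a2 b2 0 q); lia. }
    destruct (Z_le_gt_dec r (2*M2)).
    - exists r, (e2 - 2*M2*q)%Z. split; [lia|split; [lia|exact Eb]].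
    - exists (r - 4*M2)%Z, (e2 - 2*M2*q - 2*M2)%Z.
      split; [lia|split; [lia|]].
      rewrite Eb. apply (node_shift a2 (r - 4*M2) a2 r 0 1); lia. }
  destruct S3 as (b3 & e3 & hb3 & he3 & E3).
  destruct (Z.eq_dec a2 M1) as [Eq|Ne].
  - destruct (Z_le_gt_dec b3 0).
    + exists a2, b3. split.
      * unfold in_index_set. fold M1 M2. repeat split; try lia. apply (even_of _ _ e3); lia.
      * congruence.
    + exists a2, (b3 - 2*M2)%Z. split.
      * unfold in_index_set. fold M1 M2. repeat split; try lia. apply (even_of _ _ (e3 - M2)); lia.
      * rewrite E1, E2, E3, Eq. apply node_zero.
  - exists a2, b3. split.
    + unfold in_index_set. fold M1 M2. repeat split; try lia. apply (even_of _ _ e3); lia.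
    + congruence.
Qed.


Lemma rhodonea_eq rho l :
  rhodonea m1 m2 (INR rho / INR m2) (t_l m1 m2 l) =
  node m1 m2 (Z.of_nat l) (Z.of_nat l - 2 * Z.of_nat rho).
Proof.
  pose proof M1nz; pose proof M2nz.
  unfold rhodonea, node, t_l.
  rewrite minus_IZR, mult_IZR, <- !INR_IZR_INZ.
  replace (INR m2 * (INR l * PI / (2 * INR m1 * INR m2))) with (INR l * PI / (2 * INR m1)) by (field; auto).
  replace (INR m1 * (INR l * PI / (2 * INR m1 * INR m2)) - INR rho / INR m2 * PI)
    with ((INR l - 2 * INR rho) * PI / (2 * INR m2)) by (field; auto).
  reflexivity.
Qed.

End S.

Theorem theorem3p1 (m1 m2 : nat) (hm1 : (0 < m1)%nat) (hm2 : (0 < m2)%nat) :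
  let g := Nat.gcd m1 m2 in
  forall p : R * R,
    in_LS m1 m2 p <->
    exists rho l : nat,
      (rho < 2 * g)%nat /\ (l < 4 * m1 * m2 / g)%nat /\
      p = rhodonea m1 m2 (INR rho / INR m2) (t_l m1 m2 l).
Proof.
  intros g p. split.
  - intros (i1 & i2 & (_ & _ & _ & [e He]) & ->).
    destruct (Nat.gcd_bezout_pos m1 m2 hm1) as (u & v & Hb).
    destruct (Nat.gcd_divide_l m1 m2) as [a1 Ha1].
    destruct (Nat.gcd_divide_r m1 m2) as [a2 Ha2].
    fold g in Hb, Ha1, Ha2.
    assert (gpos : (0 < g)%nat) by (destruct g; lia).
    assert (HbZ : (Z.of_nat u * Z.of_nat m1 = Z.of_nat v * Z.of_nat m2 + Z.of_nat g)%Z)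
      by (rewrite <- !Nat2Z.inj_mul, <- Nat2Z.inj_add; f_equal; lia).
    assert (Ha1Z : Z.of_nat m1 = (Z.of_nat a1 * Z.of_nat g)%Z) by (rewrite <- Nat2Z.inj_mul; f_equal; exact Ha1).
    assert (Ha2Z : Z.of_nat m2 = (Z.of_nat a2 * Z.of_nat g)%Z) by (rewrite <- Nat2Z.inj_mul; f_equal; exact Ha2).
    assert (Ldef : (4 * m1 * m2 / g = 4 * a1 * m2)%nat).
    { rewrite Ha1 at 1. replace (4 * (a1 * g) * m2)%nat with (4 * a1 * m2 * g)%nat by ring.
      apply Nat.div_mul; lia. }
    set (M1 := Z.of_nat m1) in *. set (M2 := Z.of_nat m2) in *.
    set (G := Z.of_nat g) in *. set (U := Z.of_nat u) in *. set (V := Z.of_nat v) in *.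
    set (A1 := Z.of_nat a1) in *. set (A2 := Z.of_nat a2) in *.
    assert (Gp : (0 < G)%Z) by (unfold G; lia).
    assert (M2p : (0 < M2)%Z) by (unfold M2; lia).
    assert (A1p : (0 < A1)%Z) by (unfold A1; lia).
    set (d := (e - i2)%Z).
    pose proof (Z.div_mod d (2*G) ltac:(lia)) as hd.
    pose proof (Z.mod_pos_bound d (2*G) ltac:(lia)) as hdb.
    remember (d / (2*G))%Z as q eqn:Hq. remember (d mod (2*G))%Z as rh eqn:Hrh.
    remember (i1 + 4 * M1 * (- U * q))%Z as l0 eqn:Hl0.
    assert (Lp : (0 < 4 * A1 * M2)%Z) by (apply Z.mul_pos_pos; lia).
    pose proof (Z.div_mod l0 (4*A1*M2) ltac:(lia)) as hl.
    pose proof (Z.mod_pos_bound l0 (4*A1*M2) Lp) as hlb.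
    remember (l0 / (4*A1*M2))%Z as s eqn:Hs. remember (l0 mod (4*A1*M2))%Z as lz eqn:Hlz.
    clear Hq Hrh Hs Hlz.
    exists (Z.to_nat rh), (Z.to_nat lz).
    split; [|split].
    + apply Nat2Z.inj_lt. rewrite Z2Nat.id by lia. rewrite Nat2Z.inj_mul. lia.
    + rewrite Ldef. apply Nat2Z.inj_lt. rewrite Z2Nat.id by lia.
      rewrite !Nat2Z.inj_mul. lia.
    + rewrite rhodonea_eq by assumption. rewrite !Z2Nat.id by lia.
      symmetry. apply (node_shift m1 m2 hm1 hm2 i1 i2 _ _ (- U * q - A2 * s) (- V * q - A1 * s)).
      * assert (E : (M1 * A2 = A1 * M2)%Z) by (rewrite Ha1Z, Ha2Z; ring).
        assert (E' : (M1 * A2 * s = A1 * M2 * s)%Z) by (rewrite E; ring).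
        clear - E' hl Hl0. lia.
      * assert (E1 : (U * M1 * q = V * M2 * q + G * q)%Z) by (rewrite HbZ; ring).
        assert (E' : (A1 * M2 * s = A1 * M2 * s)%Z) by ring.
        clear - E1 hl Hl0 hd He. unfold d in hd. lia.
  - intros (rho & l & _ & _ & ->).
    rewrite rhodonea_eq by assumption.
    destruct (normalize m1 m2 hm1 hm2 (Z.of_nat l) (Z.of_nat l - 2 * Z.of_nat rho) (Z.of_nat l - Z.of_nat rho))
      as (i1 & i2 & Hi & E); [lia|].
    exists i1, i2. split; auto.
Qed.
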